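(* Let $\Lambda\in\mathbb{R}$, $\mathfrak{e}>0$, $\mathfrak{q}\in(0,1]$, $r_+>0$, $Q_{\max}>0$ and $K>0$, and assume $\Lambda r_+^2<3$. Let $r\in C^1([0,1];(0,\infty))$, $Q\in C^0([0,1];\mathbb{R})$ and $h\in C^1([0,1];\mathbb{R})$ satisfy: (i) $r_+/2\le r(V)\le r_+$ for all $V\in[0,1]$; (ii) $|Q(V)|\le \mathfrak{q}\,Q_{\max}$ for all $V\in[0,1]$; (iii) $\partial_V\big(r\,h\big)=-\tfrac14\Big(1-\tfrac{Q^2}{r^2}-\Lambda r^2\Big)$ on $[0,1]$; (iv) $\partial_V r(0)>0$ and $h(0)=\dfrac{\Lambda r(0)^2/3-1}{4\,\partial_V r(0)}$; (v) $\partial_V r(0)\le K\,\mathfrak{q}/\mathfrak{e}$. Then there exists a constant $C>0$ depending only on $K$, $\Lambda r_+^2$ and $Q_{\max}/r_+$ such that, if $\dfrac{\mathfrak{e}\,r_+^2}{\mathfrak{q}\,Q_{\max}}>C$, then $\sup_{V\in[0,1]} h(V)<0$.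
   Context: This abstracts the setting of characteristic gluing for the spherically symmetric Einstein–Maxwell–massless charged scalar field system with cosmological constant $\Lambda$, with metric $-\Omega^2\,dU\,dV+r^2d\omega^2$ in the gauge $\Omega\equiv1$ on the outgoing null cone $\{U=0,\ V\in[0,1]\}$. There $r(V)$ is the area radius along the cone, $h(V)=\partial_U r(0,V)$ is its transverse derivative, $Q(V)$ is the enclosed charge, $\mathfrak{e}$ is the scalar field's charge, $r_+$ is the horizon radius of the target Reissner–Nordström(-(A)dS) black hole, whose charge is $\mathfrak{q}Q_{\max}$ with $Q_{\max}$ the maximal (extremal) charge for its mass and $\Lambda$. Equation (iii) is the wave equation for $r$ (with zero scalar mass) rewritten in terms of $r\,\partial_U r$; condition (iv) expresses vanishing Hawking mass $m=\tfrac r2\big(1+4\partial_Ur\,\partial_Vr/\Omega^2-\Lambda r^2/3\big)$ at the initial sphere $V=0$. The conclusion means there are no antitrapped spheres on the cone. *)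

(* Defs.v *)
From Stdlib Require Import Reals Lra.
From Coquelicot Require Import Coquelicot.
Open Scope R_scope.

Definition I01 (x : R) : Prop := 0 <= x <= 1.

Definition cont_on01 (f : R -> R) : Prop :=
  forall x, I01 x -> filterlim f (within I01 (locally x)) (locally (f x)).

Definition deriv_on01 (f f' : R -> R) : Prop :=
  forall x, I01 x ->
    filterlim (fun y => (f y - f x) / (y - x))
      (within (fun y => I01 y /\ y <> x) (locally x)) (locally (f' x)).

Definition C1_on01 (f f' : R -> R) : Prop :=
  deriv_on01 f f' /\ cont_on01 f'.

(* Main.v *)
Require Import Defs.
From Stdlib Require Import Reals Lra.
From Coquelicot Require Import Coquelicot.
Open Scope R_scope.

Lemma ballR (x e y : R) : ball x e y <-> Rabs (y - x) < e.
Proof. reflexivity. Qed.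

Lemma deriv_eps f f' x : deriv_on01 f f' -> I01 x -> forall eps, 0 < eps ->
  exists d, 0 < d /\ forall y, I01 y -> y <> x -> Rabs (y - x) < d ->
    Rabs ((f y - f x) / (y - x) - f' x) < eps.
Proof.
  intros H Hx eps He.
  specialize (H x Hx). apply filterlim_locally with (eps := mkposreal eps He) in H.
  destruct H as [d Hd]. exists d. split. apply cond_pos.
  intros y Hy Hyx Hd'. apply (Hd y). exact Hd'. split; auto.
Qed.

Lemma deriv_cont f f' x : deriv_on01 f f' -> I01 x -> forall eps, 0 < eps ->
  exists d, 0 < d /\ forall y, I01 y -> Rabs (y - x) < d -> Rabs (f y - f x) < eps.
Proof.
  intros H Hx eps He.
  destruct (deriv_eps f f' x H Hx 1 Rlt_0_1) as [d [Hd Hy]].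
  set (m := Rabs (f' x) + 1).
  assert (Hm : 0 < m) by (unfold m; pose proof (Rabs_pos (f' x)); lra).
  exists (Rmin d (eps / m)). split.
  { apply Rmin_glb_lt; auto. apply Rdiv_lt_0_compat; auto. }
  intros y Hy1 Hy2.
  destruct (Req_dec y x) as [E|E].
  { subst. rewrite Rminus_diag, Rabs_R0. auto. }
  assert (Hd1 : Rabs (y - x) < d) by (eapply Rlt_le_trans; [exact Hy2| apply Rmin_l]).
  assert (Hd2 : Rabs (y - x) < eps / m) by (eapply Rlt_le_trans; [exact Hy2| apply Rmin_r]).
  specialize (Hy y Hy1 E Hd1).
  assert (Hq : Rabs ((f y - f x) / (y - x)) <= m).
  { unfold m. pose proof (Rabs_triang ((f y - f x) / (y - x) - f' x) (f' x)).
    replace ((f y - f x) / (y - x) - f' x + f' x) with ((f y - f x) / (y - x)) in H0 by ring. lra. }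
  replace (f y - f x) with ((f y - f x) / (y - x) * (y - x)) by (field; lra).
  rewrite Rabs_mult.
  assert (0 < Rabs (y - x)) by (apply Rabs_pos_lt; lra).
  apply Rle_lt_trans with (m * Rabs (y - x)).
  apply Rmult_le_compat_r; lra.
  apply Rmult_lt_reg_r with (/ m). apply Rinv_0_lt_compat; auto.
  replace (m * Rabs (y - x) * / m) with (Rabs (y - x)) by (field; lra). exact Hd2.
Qed.

Lemma deriv_int f f' x : deriv_on01 f f' -> 0 < x < 1 -> is_derive f x (f' x).
Proof.
  intros H Hx. apply is_derive_Reals. intros eps He.
  assert (Hx' : I01 x) by (unfold I01; lra).
  destruct (deriv_eps f f' x H Hx' eps He) as [d [Hd Hy]].
  assert (Hp : 0 < Rmin d (Rmin x (1 - x))).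
  { apply Rmin_glb_lt; auto. apply Rmin_glb_lt; lra. }
  exists (mkposreal _ Hp). simpl. intros k Hk Hkd.
  assert (H1 : Rabs k < d) by (eapply Rlt_le_trans; [exact Hkd| apply Rmin_l]).
  assert (H2 : Rabs k < Rmin x (1 - x)) by (eapply Rlt_le_trans; [exact Hkd| apply Rmin_r]).
  assert (H3 : Rabs k < x) by (eapply Rlt_le_trans; [exact H2| apply Rmin_l]).
  assert (H4 : Rabs k < 1 - x) by (eapply Rlt_le_trans; [exact H2| apply Rmin_r]).
  apply Rabs_def2 in H3. apply Rabs_def2 in H4.
  specialize (Hy (x + k)). replace (x + k - x) with k in Hy by ring.
  apply Hy; auto. unfold I01; lra. lra.
Qed.

Definition clamp (y : R) := Rmax 0 (Rmin 1 y).

Lemma clamp_I y : I01 (clamp y).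
Proof. unfold clamp, I01, Rmax, Rmin. repeat destruct Rle_dec; lra. Qed.

Lemma clamp_lip y z : Rabs (clamp z - clamp y) <= Rabs (z - y).
Proof. unfold clamp, Rmax, Rmin. repeat destruct Rle_dec; unfold Rabs; repeat destruct Rcase_abs; lra. Qed.

Lemma clamp_id y : I01 y -> clamp y = y.
Proof. unfold clamp, I01, Rmax, Rmin. intros. repeat destruct Rle_dec; lra. Qed.

Lemma mvt_bound f f' M : deriv_on01 f f' -> (forall V, I01 V -> f' V <= M) ->
  forall x, I01 x -> f x - f 0 <= M * x.
Proof.
  intros H HM x Hx.
  destruct (Req_dec x 0) as [E|E]. { subst. lra. }
  set (F := fun y => f (clamp y)).
  assert (HF : forall y, I01 y -> F y = f y) by (intros; unfold F; rewrite clamp_id; auto).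
  destruct (MVT_gen F 0 x f') as [c [Hc Hc2]].
  - intros y Hy. rewrite Rmin_left in Hy by (unfold I01 in Hx; lra).
    rewrite Rmax_right in Hy by (unfold I01 in Hx; lra).
    apply is_derive_ext_loc with f.
    + assert (Hp : 0 < Rmin y (1 - y)) by (apply Rmin_glb_lt; unfold I01 in Hx; lra).
      exists (mkposreal _ Hp). intros t Ht. rewrite ballR in Ht. simpl in Ht.
      assert (Rabs (t - y) < y) by (eapply Rlt_le_trans; [exact Ht| apply Rmin_l]).
      assert (Rabs (t - y) < 1 - y) by (eapply Rlt_le_trans; [exact Ht| apply Rmin_r]).
      apply Rabs_def2 in H0. apply Rabs_def2 in H1.
      symmetry. apply HF. unfold I01; lra.
    + apply (deriv_int f f'); auto. unfold I01 in Hx; lra.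
  - intros y _. intros eps He.
    destruct (deriv_cont f f' (clamp y) H (clamp_I y) eps He) as [d [Hd Hd2]].
    exists d. split; auto. intros z [_ Hz]. simpl in *. unfold R_dist in *.
    unfold F. apply Hd2. apply clamp_I.
    eapply Rle_lt_trans. apply clamp_lip. exact Hz.
  - rewrite Rmin_left in Hc by (unfold I01 in Hx; lra).
    rewrite Rmax_right in Hc by (unfold I01 in Hx; lra).
    rewrite !HF in Hc2 by (unfold I01 in *; lra).
    rewrite Hc2. assert (f' c <= M) by (apply HM; unfold I01 in *; lra).
    unfold I01 in Hx. nra.
Qed.

Theorem mainTheorem1 :
  forall (K a b : R), 0 < K -> a < 3 -> 0 < b ->
  exists C : R, 0 < C /\
  forall (Lam e q rp Qmax : R) (r r' Q h h' : R -> R),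
    0 < e -> 0 < q -> q <= 1 -> 0 < rp -> 0 < Qmax ->
    Lam * rp ^ 2 = a -> Qmax / rp = b ->
    C1_on01 r r' -> (forall V, I01 V -> 0 < r V) ->
    cont_on01 Q ->
    C1_on01 h h' ->
    (forall V, I01 V -> rp / 2 <= r V <= rp) ->
    (forall V, I01 V -> Rabs (Q V) <= q * Qmax) ->
    deriv_on01 (fun V => r V * h V)
      (fun V => - / 4 * (1 - Q V ^ 2 / r V ^ 2 - Lam * r V ^ 2)) ->
    0 < r' 0 ->
    h 0 = (Lam * r 0 ^ 2 / 3 - 1) / (4 * r' 0) ->
    r' 0 <= K * q / e ->
    e * rp ^ 2 / (q * Qmax) > C ->
    exists s : R, is_lub (fun y => exists V, I01 V /\ y = h V) s /\ s < 0.
Proof.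
  intros K a b HK Ha Hb.
  set (A := Rmax a 0). set (M := b ^ 2 + Rabs a / 4 + 1).
  assert (HA : A < 3) by (unfold A, Rmax; destruct Rle_dec; lra).
  assert (HA0 : 0 <= A) by (unfold A, Rmax; destruct Rle_dec; lra).
  assert (HM : 0 < M) by (unfold M; pose proof (Rabs_pos a); nra).
  exists (48 * K * M / ((3 - A) * b)). split.
  { apply Rdiv_lt_0_compat. nra. nra. }
  intros Lam e q rp Qmax r r' Q h h' He Hq Hq1 Hrp HQm Ha' Hb' _ Hr0 _ _ Hi Hii Hiii Hr'0 Hh0 Hv HC.
  assert (HQb : Qmax = b * rp) by (rewrite <- Hb'; field; lra).
  assert (Hf' : forall V, I01 V -> - / 4 * (1 - Q V ^ 2 / r V ^ 2 - Lam * r V ^ 2) <= M).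
  { intros V HV. specialize (Hi V HV). specialize (Hii V HV).
    assert (HQ2 : Q V ^ 2 <= b ^ 2 * rp ^ 2).
    { assert (Rabs (Q V) <= b * rp) by (rewrite <- HQb; nra).
      rewrite <- (pow2_abs (Q V)). pose proof (Rabs_pos (Q V)). nra. }
    assert (HQr : Q V ^ 2 / r V ^ 2 <= 4 * b ^ 2).
    { assert (0 < r V ^ 2) by nra.
      apply Rmult_le_reg_r with (r V ^ 2); auto.
      replace (Q V ^ 2 / r V ^ 2 * r V ^ 2) with (Q V ^ 2) by (field; lra).
      assert (rp ^ 2 <= 4 * r V ^ 2) by nra. assert (0 <= b ^ 2) by nra. nra. }
    assert (HL : Lam * r V ^ 2 <= Rabs a).
    { rewrite <- Ha'. rewrite Rabs_mult. rewrite (Rabs_right (rp ^ 2)) by nra.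
      pose proof (Rle_abs Lam). pose proof (Rabs_pos Lam).
      assert (r V ^ 2 <= rp ^ 2) by nra. nra. }
    unfold M. lra. }
  pose proof (mvt_bound _ _ M Hiii Hf') as Hmvt.
  assert (H0 : I01 0) by (unfold I01; lra).
  assert (Hr00 := Hi 0 H0).
  assert (HLr0 : Lam * r 0 ^ 2 <= A).
  { destruct (Rle_dec 0 Lam).
    - assert (Lam * r 0 ^ 2 <= Lam * rp ^ 2) by (apply Rmult_le_compat_l; nra).
      unfold A. pose proof (Rmax_l a 0). lra.
    - assert (Lam * r 0 ^ 2 <= 0) by nra. lra. }
  assert (HN : Lam * r 0 ^ 2 / 3 - 1 <= (A - 3) / 3) by lra.
  assert (Hh0' : h 0 <= (A - 3) * e / (12 * K * q)).
  { rewrite Hh0.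
    assert (4 * r' 0 <= 4 * K * q / e) by (unfold Rdiv in *; lra).
    unfold Rdiv. 
    apply Rle_trans with ((A - 3) / 3 * / (4 * r' 0)).
    { apply Rmult_le_compat_r. apply Rlt_le, Rinv_0_lt_compat; lra. lra. }
    assert (Hinv : / (4 * K * q / e) <= / (4 * r' 0)) by (apply Rinv_le_contravar; lra).
    replace (/ (4 * K * q / e)) with (e / (4 * K * q)) in Hinv by (field; lra).
    apply Rle_trans with ((A - 3) / 3 * (e / (4 * K * q))).
    { apply Rmult_le_compat_neg_l. lra. lra. }
    right. field. lra. }
  assert (Hneg : (A - 3) * e / (12 * K * q) < 0).
  { unfold Rdiv. apply Rmult_neg_pos. nra. apply Rinv_0_lt_compat. nra. }
  assert (Hf0 : r 0 * h 0 <= rp / 2 * ((A - 3) * e / (12 * K * q))) by nra.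
  set (X := e * rp / q).
  assert (HX : X > 48 * K * M / ((3 - A) * b) * b).
  { unfold X. replace (e * rp / q) with (e * rp ^ 2 / (q * Qmax) * b).
    apply Rmult_gt_compat_r; auto. rewrite HQb. field. lra. }
  assert (HX2 : rp / 2 * ((A - 3) * e / (12 * K * q)) = - ((3 - A) / (24 * K)) * X).
  { unfold X. field. lra. }
  replace (48 * K * M / ((3 - A) * b) * b) with (2 * M * / ((3 - A) / (24 * K))) in HX
    by (field; lra).
  assert (HX3 : ((3 - A) / (24 * K)) * X > 2 * M).
  { assert (Hc : 0 < (3 - A) / (24 * K)) by (apply Rdiv_lt_0_compat; lra).
    pose proof (Rmult_lt_compat_l _ _ _ Hc HX) as HX'.
    replace ((3 - A) / (24 * K) * (2 * M * / ((3 - A) / (24 * K)))) with (2 * M) in HX' by (field; lra).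
    lra. }
  assert (Hfin : forall V, I01 V -> h V <= - M / rp).
  { intros V HV. specialize (Hmvt V HV). simpl in Hmvt.
    assert (r V * h V < - M) by (unfold I01 in HV; nra).
    specialize (Hi V HV).
    assert (h V < 0) by nra.
    assert (h V * rp < - M) by nra.
    apply Rmult_le_reg_r with rp; auto. unfold Rdiv. rewrite Rmult_assoc, Rinv_l by lra. lra. }
  set (E := fun y => exists V, I01 V /\ y = h V).
  assert (Hbd : bound E).
  { exists (- M / rp). intros y [V [HV ->]]. auto. }
  assert (Hne : exists y, E y) by (exists (h 0); exists 0; auto).
  destruct (completeness E Hbd Hne) as [s Hs].
  exists s. split; auto.
  assert (s <= - M / rp).
  { apply Hs. intros y [V [HV ->]]. auto. }
  assert (- M / rp < 0).
  { unfold Rdiv. apply Rmult_neg_pos. lra. apply Rinv_0_lt_compat; lra. }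
  lra.
Qed.
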